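(* Let $c\in(0,1]$ be a constant and consider $m_1\times m_2$ grid graphs with $m_1\ge m_2$. For a random MRPP instance with $n=c\,m_1m_2$ robots on the $m_1\times m_2$ grid, the minimum makespan over all feasible solutions is $m_1+m_2-o(m_1)$ with probability arbitrarily close to $1$ as $m_1\to\infty$; that is, there is a function $f(m_1)=o(m_1)$ such that the probability that the minimum makespan is at least $m_1+m_2-f(m_1)$ tends to $1$ as $m_1\to\infty$. *)

(* Defs.v *)
From HB Require Import structures.
From mathcomp Require Import all_boot all_order all_algebra.
From mathcomp Require Import boolp reals.
Set Implicit Arguments. Unset Strict Implicit. Unset Printing Implicit Defensive.
Import Order.TTheory GRing.Theory Num.Theory.
Local Open Scope ring_scope.

Definition gvert (m1 m2 : nat) : finType := ('I_m1 * 'I_m2)%type.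

Definition grid_adj (m1 m2 : nat) (u v : gvert m1 m2) : bool :=
  ((u.1 == v.1 :> nat) && ((u.2.+1 == v.2 :> nat) || (v.2.+1 == u.2 :> nat)))
  || ((u.2 == v.2 :> nat) && ((u.1.+1 == v.1 :> nat) || (v.1.+1 == u.1 :> nat))).

Definition config (n m1 m2 : nat) := {ffun 'I_n -> gvert m1 m2}.

(* an MRPP instance: (start configuration, goal configuration);
   it is valid when both configurations are injective *)
Definition instance (n m1 m2 : nat) := (config n m1 m2 * config n m1 m2)%type.
Definition valid_instance n m1 m2 (x : instance n m1 m2) : bool :=
  injectiveb x.1 && injectiveb x.2.

(* Rotations along cycles are
   allowed (robots may follow each other). *)
Definition feasible_solution n m1 m2 (s g : config n m1 m2) (T : nat)
    (P : nat -> config n m1 m2) : Prop :=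
  [/\ P 0 = s, P T = g,
      (forall t, (t <= T)%N -> injective (P t)),
      (forall t i, (t < T)%N -> P t.+1 i = P t i \/ grid_adj (P t i) (P t.+1 i))
    & (forall t i j, (t < T)%N -> i != j ->
         ~ (P t.+1 i = P t j /\ P t.+1 j = P t i))].

Definition min_makespan_ge (R : realType) n m1 m2 (s g : config n m1 m2)
    (b : R) : Prop :=
  forall T P, feasible_solution s g T P -> b <= T%:R.

(* probability of an event under the uniform distribution on valid
   instances (start and goal drawn independently and uniformly among
   injective configurations) *)
Definition prob_instance (R : realType) n m1 m2
    (E : instance n m1 m2 -> Prop) : R :=
  (#|[set x : instance n m1 m2 | valid_instance x && `[< E x >]]|%:R
   / #|[set x : instance n m1 m2 | valid_instance x]|%:R)%R.

Definition little_o_id (R : realType) (f : nat -> R) : Prop :=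
  forall e : R, 0 < e -> exists M : nat, forall m, (M <= m)%N -> `|f m| <= e * m%:R.
Arguments prob_instance {R n m1 m2} E.
Arguments min_makespan_ge {R n m1 m2} s g b.
Arguments little_o_id {R} f.

(* Main.v *)
Require Import Defs.
From HB Require Import structures.
From mathcomp Require Import all_boot all_order all_algebra.
From mathcomp Require Import boolp reals.
From mathcomp Require Import zify ring lra.
Set Implicit Arguments. Unset Strict Implicit. Unset Printing Implicit Defensive.

Section Count.
Variable V : finType.
Variables A B : {set V}.
Local Notation T := (V * V)%type.

Lemma sum_tupleS n (F : n.+1.-tuple T -> nat) :
  \sum_(t : n.+1.-tuple T) F t = \sum_(x : T) \sum_(t : n.-tuple T) F [tuple of x :: t].
Proof.
rewrite pair_bigA /=.
rewrite (reindex (fun p : T * n.-tuple T => [tuple of p.1 :: p.2])) //=.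
exists (fun t : n.+1.-tuple T => (thead t, [tuple of behead t])).
  by move=> [x t] _; congr pair; apply: val_inj.
by move=> t _; rewrite [RHS]tuple_eta.
Qed.

Lemma sum_ind (X : finType) (P : pred X) : \sum_(x : X) (P x : nat) = #|[set x | P x]|.
Proof.
transitivity (\sum_(x | P x) 1)%N.
  by rewrite [RHS]big_mkcond; apply: eq_bigr => x _; case: (P x).
by rewrite sum1dep_card; apply: eq_card => x; rewrite inE.
Qed.

Definition vld n (t : n.-tuple T) := uniq (map fst t) && uniq (map snd t).
Definition nab (x : T) := ~~ ((x.1 \in A) && (x.2 \in B)).
Definition okt n (t : n.-tuple T) := vld t && all nab t.

Definition Vc n := \sum_(t : n.-tuple T) (vld t : nat).
Definition Gc n := \sum_(t : n.-tuple T) (okt t : nat).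

Lemma card_notin (s : seq V) : uniq s -> #|[set a | a \notin s]| = #|V| - size s.
Proof.
move=> us.
have h1 := cardsC [set a | a \in s].
have h2 : #|[set a | a \in s]| = size s.
  by rewrite -(card_uniqP us); apply: eq_card => a; rewrite inE.
have h3 : ~: [set a | a \in s] = [set a | a \notin s] by apply/setP => a; rewrite !inE.
rewrite -h3; lia.
Qed.

Definition Fs n (t : n.-tuple T) : {set T} :=
  setX [set a | a \notin map fst t] [set b | b \notin map snd t].
Definition Ys n (t : n.-tuple T) : {set T} :=
  setX [set a | (a \in A) && (a \notin map fst t)] [set b | (b \in B) && (b \notin map snd t)].

Lemma vld_cons n x (t : n.-tuple T) : vld [tuple of x :: t] = vld t && (x \in Fs t).
Proof.
rewrite /vld /Fs /= !inE.
by case: (x.1 \in map fst t); case: (x.2 \in map snd t); case: (uniq _); case: (uniq _).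
Qed.

Lemma okt_cons n x (t : n.-tuple T) : okt [tuple of x :: t] = okt t && (x \in Fs t :\: Ys t).
Proof.
rewrite /okt /vld /Fs /Ys /nab /= !inE.
by case: (x.1 \in map fst t); case: (x.2 \in map snd t); case: (uniq _); case: (uniq _);
  case: (x.1 \in A); case: (x.2 \in B); case: (all _ _).
Qed.

Lemma card_Fs n (t : n.-tuple T) : vld t -> #|Fs t| = ((#|V| - n) * (#|V| - n))%N.
Proof.
case/andP => u1 u2; rewrite /Fs cardsX !card_notin // !size_map size_tuple //.
Qed.

Lemma card_inseq (X : finType) (s : seq X) : (#|[set a | a \in s]| <= size s)%N.
Proof.
have -> : #|[set a | a \in s]| = #|s| by apply: eq_card => a; rewrite inE.
exact: card_size.
Qed.

Lemma card_diff_seq (X : finType) (C : {set X}) (s : seq X) :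
  (#|C| - size s <= #|[set a | (a \in C) && (a \notin s)]|)%N.
Proof.
have h : #|[set a | (a \in C) && (a \notin s)]| = #|C :\: [set a | a \in s]|.
  by apply: eq_card => a; rewrite !inE andbC.
rewrite h cardsD.
have : (#|C :&: [set a | a \in s]| <= #|[set a | a \in s]|)%N.
  by apply: subset_leq_card; apply: subsetIr.
have := card_inseq s.
lia.
Qed.

Lemma card_Ys n (t : n.-tuple T) : ((#|A| - n) * (#|B| - n) <= #|Ys t|)%N.
Proof.
rewrite /Ys cardsX; apply: leq_mul.
  by have := card_diff_seq A (map fst t); rewrite size_map size_tuple.
by have := card_diff_seq B (map snd t); rewrite size_map size_tuple.
Qed.

Lemma card_FsYs n (t : n.-tuple T) : vld t ->
  (#|Fs t :\: Ys t| <= (#|V| - n) * (#|V| - n) - (#|A| - n) * (#|B| - n))%N.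
Proof.
move=> vt.
have sub : Ys t \subset Fs t.
  apply/subsetP => x; rewrite /Ys /Fs !inE; case/andP => /andP[_ ->] /andP[_ ->] //.
rewrite cardsD (setIidPr sub) (card_Fs vt).
have := card_Ys t. lia.
Qed.

Lemma Vc_S n : Vc n.+1 = (Vc n * ((#|V| - n) * (#|V| - n)))%N.
Proof.
rewrite /Vc sum_tupleS exchange_big /= big_distrl /=.
apply: eq_bigr => t _.
under eq_bigr => x _ do rewrite vld_cons.
case vt: (vld t) => /=.
  rewrite sum_ind mul1n -(card_Fs vt); apply: eq_card => x; rewrite inE //.
by rewrite big1 // mul0n.
Qed.

Lemma Gc_S n : (Gc n.+1 <= Gc n * ((#|V| - n) * (#|V| - n) - (#|A| - n) * (#|B| - n)))%N.
Proof.
rewrite /Gc sum_tupleS exchange_big /= big_distrl /=.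
apply: leq_sum => t _.
under eq_bigr => x _ do rewrite okt_cons.
case ot: (okt t) => /=.
  rewrite sum_ind mul1n.
  have vt : vld t by case/andP: ot.
  have <- : #|Fs t :\: Ys t| = #|[set x | x \in Fs t :\: Ys t]|.
    by apply: eq_card => x; rewrite inE.
  exact: card_FsYs.
by rewrite big1 // mul0n.
Qed.

End Count.

Import Order.TTheory GRing.Theory Num.Theory.

Section Real.
Local Open Scope ring_scope.
Variable R : realType.
Variable V : finType.
Variables A B : {set V}.
Variable K : nat.
Hypothesis KA : (K <= #|A|)%N.
Hypothesis KB : (K <= #|B|)%N.
Variable q : R.
Hypothesis q0 : 0 <= q.
Hypothesis q1 : q <= 1.
Hypothesis qK : 4 * q * (#|V| * #|V|)%:R <= (K * K)%:R.

Local Open Scope ring_scope.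

Lemma step_bound k : (k < K %/ 2)%N ->
  (((#|V| - k) * (#|V| - k) - (#|A| - k) * (#|B| - k))%N%:R : R)
    <= (1 - q) * ((#|V| - k) * (#|V| - k))%N%:R.
Proof.
move=> hk.
have aN : (#|A| <= #|V|)%N by apply: max_card.
have bN : (#|B| <= #|V|)%N by apply: max_card.
set N := #|V|.
have u1 : ((K - k) * (K - k) <= (#|A| - k) * (#|B| - k))%N by apply: leq_mul; lia.
have u2 : ((#|A| - k) * (#|B| - k) <= (N - k) * (N - k))%N by apply: leq_mul; lia.
have u3 : (K * K <= 4 * ((K - k) * (K - k)))%N.
  have : (K <= 2 * (K - k))%N by have := leq_trunc_div K 2; lia.
  move=> h; have := leq_mul h h; lia.
have u4 : ((N - k) * (N - k) <= N * N)%N by apply: leq_mul; lia.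
move: u1 u2 u3 u4.
set a := ((K - k) * (K - k))%N.
set b := ((#|A| - k) * (#|B| - k))%N.
set NN := ((N - k) * (N - k))%N.
set KK := (K * K)%N.
set N2 := (N * N)%N.
move=> u1 u2 u3 u4.
rewrite natrB //.
move: u1 u3 u4; rewrite -!(ler_nat R) natrM => u1 u3 u4.
fold N2 in qK.
have : 0 <= q * (N2%:R - NN%:R) by apply: mulr_ge0 => //; rewrite subr_ge0.
have qK' : 4 * q * N2%:R <= KK%:R by [].
nra.
Qed.

Lemma Gc_le_Vc n : (Gc A B n <= Vc V n)%N.
Proof. apply: leq_sum => t _; rewrite /okt; case: (vld t) => //=; exact: leq_b1. Qed.

Lemma Gc_bound n : ((Gc A B n)%:R : R) <= (1 - q) ^+ (minn n (K %/ 2)) * (Vc V n)%:R.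
Proof.
elim: n => [|n IH].
  rewrite min0n expr0 mul1r ler_nat; exact: Gc_le_Vc.
have hG := Gc_S A B n.
rewrite -(ler_nat R) natrM in hG.
rewrite Vc_S natrM.
have G0 : 0 <= ((Gc A B n)%:R : R) by [].
have q10 : 0 <= 1 - q by rewrite subr_ge0.
apply: (le_trans hG).
case: (ltnP n (K %/ 2)) => hn.
  have -> : minn n.+1 (K %/ 2) = n.+1 by apply/minn_idPl.
  move/minn_idPl: (ltnW hn) => e; rewrite e in IH.
  have hs := step_bound hn.
  rewrite exprS.
  apply: (le_trans (ler_wpM2l G0 hs)).
  set g := ((Gc A B n)%:R : R) in IH G0 *.
  set v := ((Vc V n)%:R : R) in IH *.
  set NN := (((#|V| - n) * (#|V| - n))%N%:R : R).
  set p := (1 - q) ^+ n in IH *.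
  have NN0 : 0 <= NN by [].
  rewrite -subr_ge0 (_ : _ - _ = ((1 - q) * NN) * (p * v - g)); last by ring.
  by apply: mulr_ge0; [apply: mulr_ge0 | rewrite subr_ge0].
have -> : minn n.+1 (K %/ 2) = minn n (K %/ 2).
  by rewrite !(minn_idPr _) // ltnW.
apply: (le_trans (ler_wpM2l G0 (_ : _ <= ((#|V| - n) * (#|V| - n))%N%:R))).
  by rewrite ler_nat leq_subr.
rewrite mulrA; apply: ler_wpM2r => //.
Qed.

End Real.

Section Geom.
Local Open Scope ring_scope.

Lemma makespan_pot n m1 m2 (s g : config n m1 m2) T P i :
  feasible_solution s g T P ->
  ((g i).1 + (g i).2 <= (s i).1 + (s i).2 + T)%N.
Proof.
case=> P0 PT _ Hmove _.
suff H : forall t, (t <= T)%N -> ((P t i).1 + (P t i).2 <= (s i).1 + (s i).2 + t)%N.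
  by have := H T (leqnn T); rewrite PT.
elim=> [|t IH] ht; first by rewrite P0 addn0.
have := IH (ltnW ht).
case: (Hmove t i ht) => [-> | ]; first by lia.
rewrite /grid_adj.
case/orP => /andP[/eqP e1 /orP[/eqP e2|/eqP e2]]; lia.
Qed.

Fixpoint dd (m : nat) : nat :=
  match m with
  | 0 => 0
  | m'.+1 => if ((dd m').+1 ^ 4 <= m'.+1)%N then (dd m').+1 else dd m'
  end.

Lemma dd_spec m : (dd m ^ 4 <= m < (dd m).+1 ^ 4)%N.
Proof.
elim: m => [|m IH] //=.
case/andP: IH => h1 h2.
case: ifP => h.
  rewrite h /=.
  have : ((dd m).+1 ^ 4 < (dd m).+2 ^ 4)%N by rewrite ltn_exp2r.
  lia.
apply/andP; split; first by lia.
by rewrite ltnNge h.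
Qed.

Lemma dd_ge k m : (k ^ 4 <= m)%N -> (k <= dd m)%N.
Proof.
move=> hk; case/andP: (dd_spec m) => _ h2.
rewrite leqNgt; apply/negP => hlt.
have : ((dd m).+1 ^ 4 <= k ^ 4)%N by rewrite leq_exp2r.
lia.
Qed.

Lemma bern (R : realType) (q : R) k : 0 <= q -> q <= 1 ->
  (1 - q) ^+ k * (1 + k%:R * q) <= 1.
Proof.
move=> q0 q1; elim: k => [|k IH]; first by rewrite expr0 mul0r addr0 mulr1.
rewrite exprS -mulrA.
apply: le_trans IH.
have hp : 0 <= (1 - q) ^+ k by apply: exprn_ge0; rewrite subr_ge0.
rewrite -natr1 -subr_ge0.
rewrite (_ : _ - _ = (1 - q) ^+ k * (q * q * (k%:R + 1))); last by ring.
apply: mulr_ge0 => //; apply: mulr_ge0; first exact: mulr_ge0.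
by apply: addr_ge0.
Qed.

End Geom.

Section Grid.
Variables m1 m2 w h : nat.
Hypothesis hw : (w <= m1)%N.
Hypothesis hh : (h <= m2)%N.

Definition Aset : {set gvert m1 m2} := [set v : gvert m1 m2 | ((v.1 : nat) < w) && ((v.2 : nat) < h)]%N.
Definition Bset : {set gvert m1 m2} :=
  [set v : gvert m1 m2 | (m1 - w <= (v.1 : nat)) && (m2 - h <= (v.2 : nat))]%N.

Lemma card_Aset : (w * h <= #|Aset|)%N.
Proof.
pose f := fun p : 'I_w * 'I_h => ((widen_ord hw p.1, widen_ord hh p.2) : gvert m1 m2).
have inj : injective f.
  by move=> [a b] [a' b'] [] /val_inj -> /val_inj ->.
have := card_imset [set: 'I_w * 'I_h] inj.
rewrite cardsT card_prod !card_ord => <-.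
apply: subset_leq_card; apply/subsetP => v /imsetP [[a b] _ ->].
by rewrite inE /= ltn_ord ltn_ord.
Qed.

Lemma card_Bset : (#|Aset| <= #|Bset|)%N.
Proof.
pose f := fun v : gvert m1 m2 => ((rev_ord v.1, rev_ord v.2) : gvert m1 m2).
have inj : injective f.
  move=> [a b] [a' b'] e; have e1 := congr1 fst e; have e2 := congr1 snd e.
  by simpl in e1, e2; rewrite (rev_ord_inj e1) (rev_ord_inj e2).
rewrite -(card_imset Aset inj).
apply: subset_leq_card; apply/subsetP => v /imsetP [[a b] Ha ->].
move: Ha; rewrite !inE /= => /andP[h1 h2].
have := ltn_ord a; have := ltn_ord b.
move=> hb ha; apply/andP; split; lia.
Qed.

End Grid.

Section Inst.
Local Open Scope ring_scope.
Variables n m1 m2 : nat.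
Local Notation V := (gvert m1 m2).

Definition phi (x : instance n m1 m2) : n.-tuple (V * V)%type :=
  [tuple (x.1 i, x.2 i) | i < n].
Definition psi (t : n.-tuple (V * V)%type) : instance n m1 m2 :=
  ([ffun i => (tnth t i).1], [ffun i => (tnth t i).2]).

Lemma sum_inst (F : n.-tuple (V * V)%type -> nat) :
  (\sum_(x : instance n m1 m2) F (phi x) = \sum_t F t)%N.
Proof.
symmetry; rewrite (reindex phi) //; exists psi.
  move=> [s g] _; rewrite /psi /phi /=; congr pair; apply/ffunP => i;
  by rewrite ffunE tnth_mktuple.
move=> t _; apply: eq_from_tnth => i; rewrite /phi /psi tnth_mktuple /= !ffunE.
by case: (tnth t i).
Qed.

Lemma valid_phi x : valid_instance x = vld (phi x).
Proof.
rewrite /valid_instance /vld /phi /= -!map_comp /=.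
by rewrite /injectiveb /dinjectiveb enumT.
Qed.

End Inst.

Section Prob.
Local Open Scope ring_scope.

Lemma prob_lower (R : realType) n m1 m2 (A B : {set gvert m1 m2})
    (E : instance n m1 m2 -> Prop) :
  (forall (x : instance n m1 m2) (i : 'I_n), x.1 i \in A -> x.2 i \in B -> E x) ->
  (0 < Vc (gvert m1 m2) n)%N ->
  1 - (Gc A B n)%:R / (Vc (gvert m1 m2) n)%:R <= @prob_instance R n m1 m2 E.
Proof.
move=> HE Vpos.
rewrite /prob_instance.
have hV : #|[set x : instance n m1 m2 | valid_instance x]| = Vc (gvert m1 m2) n.
  rewrite -sum_ind /Vc -sum_inst; apply: eq_bigr => x _; by rewrite valid_phi.
have hsplit : Vc (gvert m1 m2) n =
   (\sum_(x : instance n m1 m2) (valid_instance x && ~~ all (nab A B) (phi x) : nat) + Gc A B n)%N.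
  rewrite /Vc /Gc -!sum_inst -big_split; apply: eq_bigr => x _.
  rewrite /okt -valid_phi; case: (valid_instance x); case: (all _ _) => //.
have hgood : (\sum_(x : instance n m1 m2) (valid_instance x && ~~ all (nab A B) (phi x) : nat)
   <= #|[set x : instance n m1 m2 | valid_instance x && `[< E x >]]|)%N.
  rewrite -sum_ind; apply: leq_sum => x _.
  case vx: (valid_instance x) => //=.
  case ax: (all _ _) => //=.
  have : E x.
    move/negbT: ax => /allPn [y /tnthP [j ->]].
    rewrite tnth_map /nab /= negbK => /andP [h1 h2].
    exact: (HE x _ h1 h2).
  by move=> ex; rewrite asboolT.
rewrite hV.
set Vn := Vc (gvert m1 m2) n in hsplit Vpos *.
set G := Gc A B n in hsplit *.
set S := (\sum_(x : instance n m1 m2) _)%N in hsplit hgood.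
set G' := #|_| in hgood *.
have h1 : (Vn%:R : R) - G%:R <= G'%:R.
  rewrite hsplit natrD addrK ler_nat //.
have Vp : (0 : R) < Vn%:R by rewrite ltr0n.
rewrite -[X in X - _](divff (lt0r_neq0 Vp)) -mulrBl.
apply: ler_wpM2r => //.
by rewrite invr_ge0 ltW.
Qed.

End Prob.

Lemma Vc_pos (V : finType) n : (n <= #|V|)%N -> (0 < Vc V n)%N.
Proof.
elim: n => [|n IH] hn.
  rewrite /Vc (eq_bigr (fun _ => 1%N)); last by move=> t _; rewrite tuple0.
  by rewrite sum1_card card_tuple expn0.
by rewrite Vc_S muln_gt0 IH ?(ltnW hn) //= muln_gt0 subn_gt0 hn.
Qed.

Lemma w_bound C m d w : (8 * C <= d)%N -> (d ^ 4 <= m)%N -> (2 <= d)%N ->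
  (m < w.+1 * d)%N -> (C * (m * m) <= w ^ 3)%N.
Proof.
move=> h1 h2 h3 h4.
have e1 : (m <= 2 * (w * d))%N.
  have : (2 * d <= d ^ 4)%N.
    have h5 : (d ^ 1 <= d ^ 3)%N by apply: leq_pexp2l => //; lia.
    rewrite expn1 in h5.
    rewrite (expnS d 3) mulnC; apply: leq_mul => //; lia.
  nia.
have e2 : (8 * C * (d ^ 3) <= m)%N.
  apply: (leq_trans _ h2); rewrite (_ : d ^ 4 = d * d ^ 3)%N; last by ring.
  exact: (leq_mul h1 (leqnn _)).
have e3 : (m ^ 3 <= (2 * (w * d)) ^ 3)%N by rewrite leq_exp2r.
have e4 : (8 * C * (d ^ 3) * (m * m) <= m ^ 3)%N.
  rewrite (_ : m ^ 3 = m * (m * m))%N; last by ring.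
  exact: (leq_mul e2 (leqnn _)).
have e5 : ((2 * (w * d)) ^ 3 = 8 * d ^ 3 * w ^ 3)%N.
  by rewrite !expnMn; ring.
have d3 : (0 < 8 * d ^ 3)%N by rewrite muln_gt0 expn_gt0; lia.
rewrite -(leq_pmul2l d3).
rewrite -e5; apply: (leq_trans _ e3); apply: (leq_trans _ e4).
apply: eq_leq; ring.
Qed.

Lemma K3_bound C m1 m2 w : (1 <= C)%N -> (C * (m1 * m1) <= w ^ 3)%N -> (m2 <= m1)%N ->
  (C * ((m1 * m2) * (m1 * m2)) <= (w * minn w m2) ^ 3)%N.
Proof.
move=> C1 hw h21.
have a1 : (C * (m1 * m1) * (m2 * m2) <= w ^ 3 * (m2 * m2))%N by apply: leq_mul.
case: (leqP w m2) => hwm.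
  have a2 : (w ^ 3 * (m2 * m2) <= w ^ 3 * (m1 * m1))%N by apply: leq_mul => //; apply: leq_mul.
  have a3 : (w ^ 3 * (m1 * m1) <= w ^ 3 * (C * (m1 * m1)))%N.
    by apply: leq_mul => //; rewrite leq_pmull.
  have a4 : (w ^ 3 * (C * (m1 * m1)) <= w ^ 3 * w ^ 3)%N by apply: leq_mul.
  have -> : ((w * w) ^ 3 = w ^ 3 * w ^ 3)%N by ring.
  have -> : (C * (m1 * m2 * (m1 * m2)) = C * (m1 * m1) * (m2 * m2))%N by ring.
  by apply: (leq_trans a1); apply: (leq_trans a2); apply: (leq_trans a3).
have -> : ((w * m2) ^ 3 = w ^ 3 * (m2 * m2) * m2)%N by ring.
have -> : (C * (m1 * m2 * (m1 * m2)) = C * (m1 * m1) * (m2 * m2))%N by ring.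
case: m2 a1 h21 hwm => [|m2] a1 h21 hwm; first by rewrite !muln0.
apply: (leq_trans a1); rewrite leq_pmulr //.
Qed.

Lemma target L c' K N n : (1 <= L)%N -> (1 <= c')%N ->
  (16 * L * c' * (N * N) <= K ^ 3)%N -> (K <= N)%N -> (c' <= N)%N -> (N < c' * n.+1)%N ->
  (4 * L * (N * N) <= minn n (K %/ 2) * (K * K))%N.
Proof.
move=> L1 c1 hK KN cN Nn.
have N1 : (1 <= N)%N by lia.
have K3 : (K ^ 3 <= N * (K * K))%N.
  rewrite (_ : K ^ 3 = K * (K * K))%N; last by ring.
  by apply: leq_mul.
have KK : (16 * L * c' * N <= K * K)%N.
  have : (N * (16 * L * c' * N) <= N * (K * K))%N.
    apply: leq_trans K3; apply: leq_trans hK; apply: eq_leq; ring.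
  by rewrite leq_pmul2l.
have n1 : (1 <= n)%N.
  case: n Nn => [|n] Nn //; lia.
have K2 : (2 <= K)%N.
  rewrite leqNgt; apply/negP => hk.
  have : (K ^ 3 <= 1 ^ 3)%N by rewrite leq_exp2r //; lia.
  have : (16 * 1 * 1 * (1 * 1) <= 16 * L * c' * (N * N))%N.
    by apply: leq_mul; [apply: leq_mul; [apply: leq_mul|]|apply: leq_mul].
  lia.
case: (leqP n (K %/ 2)) => hm.
  have b1 : (N * (K * K) <= c' * n.+1 * (K * K))%N by apply: leq_mul => //; lia.
  have b2 : (N * (16 * L * c' * N) <= N * (K * K))%N by apply: leq_mul.
  have b3 : (c' * (16 * L * (N * N)) <= c' * (n.+1 * (K * K)))%N.
    apply: leq_trans (_ : N * (16 * L * c' * N) <= _)%N.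
      by apply: eq_leq; ring.
    apply: (leq_trans b2); apply: (leq_trans b1); apply: eq_leq; ring.
  rewrite leq_pmul2l // in b3.
  have b4 : (n.+1 * (K * K) <= 2 * (n * (K * K)))%N.
    apply: (leq_trans (leq_mul (_ : n.+1 <= 2 * n)%N (leqnn (K * K)))); first by lia.
    by apply: eq_leq; ring.
  lia.
have d1 : (K <= 4 * (K %/ 2))%N.
  have := leq_trunc_div K 2; have := ltn_ceil K (isT : (0 < 2)%N); lia.
have d2 : (K ^ 3 <= 4 * (K %/ 2) * (K * K))%N.
  rewrite (_ : K ^ 3 = K * (K * K))%N; last by ring.
  by apply: leq_mul.
have d3 : (16 * L * (N * N) <= 16 * L * c' * (N * N))%N.
  by apply: leq_mul => //; rewrite leq_pmulr.
have : (4 * (4 * L * (N * N)) <= 4 * (K %/ 2 * (K * K)))%N.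
  apply: leq_trans (_ : 16 * L * (N * N) <= _)%N; first by apply: eq_leq; ring.
  apply: (leq_trans d3); apply: (leq_trans hK); apply: (leq_trans d2); apply: eq_leq; ring.
by rewrite leq_pmul2l.
Qed.

Local Open Scope ring_scope.


Lemma makespan_E (R : realType) n m1 m2 w h (x : instance n m1 m2) i : (h <= w)%N ->
  x.1 i \in Aset m1 m2 w h -> x.2 i \in Bset m1 m2 w h ->
  min_makespan_ge x.1 x.2 (((m1 + m2)%:R : R) - (4 * w)%N%:R).
Proof.
move=> hw; rewrite !inE => /andP [a1 a2] /andP [b1 b2] T P fs.
have := makespan_pot i fs.
have := ltn_ord (x.2 i).1; have := ltn_ord (x.2 i).2.
move: a1 a2 b1 b2.
move: ((x.1 i).1 : nat) ((x.1 i).2 : nat) ((x.2 i).1 : nat) ((x.2 i).2 : nat) => s1 s2 g1 g2.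
move=> a1 a2 b1 b2 o1 o2 hp.
rewrite lerBlDr -natrD ler_nat.
lia.
Qed.

Theorem mainTheorem2 (R : realType) (c : R) (hc0 : 0 < c) (hc1 : c <= 1) :
  exists f : nat -> R, little_o_id f /\
    forall eps : R, 0 < eps -> exists M : nat,
      forall m1 m2 : nat, (M <= m1)%N -> (0 < m2)%N -> (m2 <= m1)%N ->
        let n := Num.truncn (c * (m1 * m2)%:R) in
        1 - eps <= @prob_instance R n m1 m2
          (fun x : instance n m1 m2 =>
             min_makespan_ge x.1 x.2 ((m1 + m2)%:R - f m1)).
Proof.
exists (fun m => (4 * (m %/ dd m))%N%:R); split.
  move=> e e0.
  exists ((Num.truncn (4 / e)).+1 ^ 4)%N => m hm.
  have hd := dd_ge hm.
  have hk := truncnS_gt (4 / e).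
  have hwd : (m %/ dd m * dd m <= m)%N by apply: leq_trunc_div.
  rewrite ger0_norm // natrM.
  set w := (m %/ dd m)%N in hwd *.
  set d := dd m in hd hwd.
  set k := (Num.truncn (4 / e)).+1 in hd hk.
  have h4 : 4 < k%:R * e by rewrite -ltr_pdivrMr.
  have kd : (k%:R : R) <= d%:R by rewrite ler_nat.
  have wd : (w%:R : R) * d%:R <= m%:R by rewrite -natrM ler_nat.
  have w0 : (0 : R) <= w%:R by [].
  have a1 : 0 <= (k%:R * e - 4) * w%:R by apply: mulr_ge0 => //; rewrite subr_ge0 ltW.
  have a2 : 0 <= (d%:R - k%:R) * e * w%:R.
    by apply: mulr_ge0 => //; apply: mulr_ge0; [rewrite subr_ge0 | apply: ltW].
  have a3 : 0 <= e * (m%:R - w%:R * d%:R) by apply: mulr_ge0; [apply: ltW | rewrite subr_ge0].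
  nra.
move=> eps eps0.
pose L := (Num.truncn eps^-1).+1.
pose c' := (Num.truncn c^-1).+1.
pose C := (16 * L * c')%N.
pose D0 := (8 * C + c' + 2)%N.
exists (D0 ^ 4)%N => m1 m2 hM hm2 h21.
cbv zeta; set n := Num.truncn (c * _).
have dD : (D0 <= dd m1)%N := dd_ge hM.
have d4 : (dd m1 ^ 4 <= m1)%N by case/andP: (dd_spec m1).
set d := dd m1 in dD d4 *.
have dpos : (0 < d)%N by rewrite /D0 in dD; lia.
set w := (m1 %/ d)%N.
have hwd : (m1 < w.+1 * d)%N by apply: ltn_ceil.
have C1 : (1 <= C)%N by rewrite /C /L /c'; rewrite !muln_gt0.
have hw3 : (C * (m1 * m1) <= w ^ 3)%N.
  by apply: (w_bound (d := d)) => //; rewrite /D0 in dD; lia.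
set h := minn w m2.
have wm1 : (w <= m1)%N by apply: leq_div.
have hh : (h <= m2)%N by apply: geq_minr.
have hhw : (h <= w)%N by apply: geq_minl.
set N := (m1 * m2)%N.
set K := (w * h)%N.
have K3 : (C * (N * N) <= K ^ 3)%N by apply: K3_bound.
have KN : (K <= N)%N by apply: leq_mul.
have dm1 : (d <= m1)%N.
  apply: leq_trans d4; rewrite -{1}(expn1 d); apply: leq_pexp2l => //.
have m1N : (m1 <= N)%N by rewrite /N leq_pmulr.
have cN : (c' <= N)%N by rewrite /D0 in dD; lia.
have cc : 1 < c * c'%:R.
  have := truncnS_gt c^-1; rewrite -/c' => h1.
  by rewrite -ltr_pdivrMl // mulr1.
have nN : (N < c' * n.+1)%N.
  rewrite -(ltr_nat R) natrM.
  have h1 := truncnS_gt (c * N%:R); rewrite -/n in h1.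
  have h2 : (0 : R) <= N%:R by [].
  have h3 : (0 : R) < c'%:R by rewrite ltr0n.
  nra.
have nleN : (n <= N)%N.
  rewrite /n truncn_le_nat.
  have h2 : (0 : R) <= N%:R by [].
  rewrite -natr1 -/N; nra.
have tg : (4 * L * (N * N) <= minn n (K %/ 2) * (K * K))%N.
  exact: (@target L c' K N n isT isT K3 KN cN nN).
have cardV : #|gvert m1 m2| = N by rewrite card_prod !card_ord.
have Npos : (0 < N)%N by rewrite muln_gt0; apply/andP; split; lia.
have NN0 : (0 : R) < (N * N)%N%:R by rewrite ltr0n muln_gt0 Npos.
pose q : R := (K * K)%N%:R / (4 * (N * N)%N%:R).
have q0 : 0 <= q by apply: divr_ge0; [|apply: mulr_ge0; [|apply: ltW]].
have q1 : q <= 1.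
  rewrite /q ler_pdivrMr ?mul1r; last by apply: mulr_gt0.
  have : ((K * K)%N%:R : R) <= (N * N)%N%:R by rewrite ler_nat; apply: leq_mul.
  lra.
have qK : 4 * q * (#|gvert m1 m2| * #|gvert m1 m2|)%N%:R <= (K * K)%N%:R.
  rewrite cardV (_ : 4 * q * _ = (K * K)%N%:R) // /q.
  by field; rewrite pnatr_eq0 -lt0n.
have KA : (K <= #|Aset m1 m2 w h|)%N by apply: card_Aset.
have KB : (K <= #|Bset m1 m2 w h|)%N.
  by apply: leq_trans KA _; apply: card_Bset.
have GB := Gc_bound KA KB q0 q1 qK n.
set n' := minn n (K %/ 2) in tg GB.
set X := (1 - q) ^+ n' in GB.
have X0 : 0 <= X by apply: exprn_ge0; rewrite subr_ge0.
have hb := bern n' q0 q1; rewrite -/X in hb.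
have yL : (L%:R : R) <= n'%:R * q.
  rewrite /q mulrA ler_pdivlMr; last by apply: mulr_gt0.
  move: tg; rewrite -(ler_nat R) !natrM => tg.
  lra.
have epsL : 1 < eps * L%:R.
  have := truncnS_gt eps^-1; rewrite -/L => h1.
  by rewrite -ltr_pdivrMl // mulr1.
have Xe : X <= eps.
  set y := n'%:R * q in yL hb.
  have y0 : 0 <= y by apply: mulr_ge0.
  have h5 : X * y <= 1 by nra.
  nra.
have Vp : (0 < Vc (gvert m1 m2) n)%N by apply: Vc_pos; rewrite cardV.
have VpR : (0 : R) < (Vc (gvert m1 m2) n)%:R by rewrite ltr0n.
have GV : (Gc (Aset m1 m2 w h) (Bset m1 m2 w h) n)%:R / (Vc (gvert m1 m2) n)%:R <= eps.
  rewrite ler_pdivrMr //; apply: (le_trans GB); apply: ler_wpM2r; [exact: ltW VpR | exact: Xe].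
apply: le_trans (prob_lower R (A := Aset m1 m2 w h) (B := Bset m1 m2 w h) _ Vp).
  by rewrite lerD2l lerN2.
move=> x i; exact: makespan_E.
Qed.
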